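(* Let $\nu\geq\frac12$ and $0<B\leq\sqrt{\frac{\pi}{e}}$, and set $x_0:=\frac{\pi}{B^2}$. If $z>0$ satisfies $$2z\;\leq\;\log x_0-\log\log x_0+\frac12\,\frac{\log\log x_0}{\log x_0},$$ then $K_\nu(z)\geq K_{1/2}(z)\geq B$.
   Context: $K_\nu$ denotes the modified Bessel function of the second kind of real order $\nu$, for real argument $z>0$; in particular $K_{1/2}(z)=e^{-z}\sqrt{\pi/(2z)}$. *)

(* Defs.v *)
From Stdlib Require Import Reals.
From Coquelicot Require Import Coquelicot.
Open Scope R_scope.

(* Modified Bessel function of the second kind, real order nu, real argument z > 0,
   via the standard integral representation (DLMF 10.32.9):
   K_nu(z) = \int_0^oo exp(-z cosh t) cosh(nu t) dt. *)
Definition besselK (nu z : R) : R :=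
  RInt_gen (fun t => exp (- z * cosh t) * cosh (nu * t))
           (at_point 0) (Rbar_locally p_infty).

(* Main.v *)
Require Import Defs.
From Stdlib Require Import Reals Lra.
From Stdlib Require Classical_Prop.
From Coquelicot Require Import Coquelicot.
Open Scope R_scope.


Lemma loc_all (x : R) (P : R -> Prop) : (forall y, P y) -> locally x P.
Proof. intros H. exists (mkposreal 1 Rlt_0_1). intros; apply H. Qed.

Lemma cont_of_der (f : R -> R) x : ex_derive f x -> continuous f x.
Proof. intros H. apply (ex_derive_continuous (K:=R_AbsRing) (V:=R_NormedModule)). exact H. Qed.

Lemma ex_RInt_cont (f : R -> R) a b : (forall z, Rmin a b <= z <= Rmax a b -> continuous f z) -> ex_RInt f a b.
Proof. intros H. apply (ex_RInt_continuous (V:=R_CompleteNormedModule)). exact H. Qed.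

Definition g (t : R) := exp (-(t*t)).
Definition G (x : R) := RInt g 0 x.

Lemma g_cont t : continuous g t.
Proof. apply cont_of_der. unfold g. auto_derive. auto. Qed.

Lemma ex_RInt_g a b : ex_RInt g a b.
Proof. apply ex_RInt_cont. intros; apply g_cont. Qed.

Lemma is_derive_G x : is_derive G x (g x).
Proof.
  apply (is_derive_RInt g G 0 x).
  - apply loc_all. intros y. apply (RInt_correct (V:=R_CompleteNormedModule)), ex_RInt_g.
  - apply g_cont.
Qed.

Definition h (x t : R) := exp (-(x*x) * (1 + t*t)) / (1 + t*t).
Definition dh (x t : R) := -2 * x * exp (-(x*x) * (1 + t*t)).
Definition Phi (x : R) := RInt (h x) 0 1.

Lemma pos1t t : 0 < 1 + t*t.
Proof. nra. Qed.

Lemma is_derive_h x t : is_derive (fun u => h u t) x (dh x t).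
Proof.
  unfold h, dh. auto_derive.
  - generalize (pos1t t); lra.
  - field. generalize (pos1t t); lra.
Qed.

Lemma Derive_h x t : Derive (fun u => h u t) x = dh x t.
Proof. apply is_derive_unique, is_derive_h. Qed.

Lemma h_cont x t : continuous (h x) t.
Proof. apply cont_of_der. unfold h. auto_derive. generalize (pos1t t); lra. Qed.

Lemma cont_dh x t : continuity_2d_pt dh x t.
Proof.
  unfold dh.
  apply continuity_2d_pt_mult.
  apply continuity_2d_pt_mult. apply continuity_2d_pt_const. apply continuity_2d_pt_id1.
  apply continuity_1d_2d_pt_comp with (f := exp) (g := fun u v => -(u*u)*(1+v*v)).
  apply derivable_continuous_pt, derivable_exp.
  apply continuity_2d_pt_mult.
  apply continuity_2d_pt_opp, continuity_2d_pt_mult; apply continuity_2d_pt_id1.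
  apply continuity_2d_pt_plus. apply continuity_2d_pt_const.
  apply continuity_2d_pt_mult; apply continuity_2d_pt_id2.
Qed.

Lemma is_derive_Phi x : is_derive Phi x (-2 * exp (-(x*x)) * G x).
Proof.
  assert (H := is_derive_RInt_param h 0 1 x).
  unfold Phi.
  replace (-2 * exp (-(x*x)) * G x) with (RInt (fun t => Derive (fun u => h u t) x) 0 1).
  apply H.
  - apply loc_all. intros y t _. eexists; apply is_derive_h.
  - intros t _. apply continuity_2d_pt_ext with (f := dh).
    intros; symmetry; apply Derive_h. apply cont_dh.
  - apply loc_all. intros y. apply ex_RInt_cont. intros; apply h_cont.
  - rewrite (RInt_ext _ (fun t => scal (-2 * exp (-(x*x))) (scal x (g (x * t + 0))))).
    rewrite (RInt_scal (V:=R_CompleteNormedModule)). rewrite (RInt_comp_lin (V:=R_CompleteNormedModule)).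
    unfold G. rewrite Rmult_0_r, Rplus_0_r, Rmult_1_r, Rplus_0_r. unfold scal; simpl; unfold mult; simpl. reflexivity.
    apply ex_RInt_g.
    apply ex_RInt_cont. intros. apply cont_of_der. unfold g, scal; simpl; unfold mult; simpl. auto_derive. auto.
    intros t _. rewrite Derive_h. unfold dh, g, scal; simpl; unfold mult; simpl.
    replace (-(x*x)*(1+t*t)) with (-(x*x) + -((x*t+0)*(x*t+0))) by ring.
    rewrite exp_plus. ring.
Qed.

Definition F (x : R) := G x * G x + Phi x.

Lemma is_derive_F x : is_derive F x 0.
Proof.
  assert (H : is_derive (fun y => plus (mult (G y) (G y)) (Phi y)) x
     (plus (plus (mult (g x) (G x)) (mult (G x) (g x))) (-2 * exp (-(x*x)) * G x))).
  { apply (is_derive_plus (K:=R_AbsRing) (V:=R_NormedModule)).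
    apply (is_derive_mult (K:=R_AbsRing)); try apply is_derive_G.
    intros; apply Rmult_comm.
    apply is_derive_Phi. }
  unfold plus, mult in H; simpl in H.
  replace 0 with (g x * G x + G x * g x + -2 * exp (- (x * x)) * G x).
  exact H. unfold g; ring.
Qed.

Lemma F_const x : F x = F 0.
Proof.
  assert (H1 : is_RInt (fun _ => 0) 0 x (minus (F x) (F 0))).
  { apply (is_RInt_derive (V:=R_CompleteNormedModule)).
    intros; apply is_derive_F. intros; apply continuous_const. }
  apply (is_RInt_unique (V:=R_CompleteNormedModule)) in H1.
  rewrite (RInt_const (V:=R_CompleteNormedModule)) in H1.
  unfold minus, plus, opp, scal in H1; simpl in H1; unfold mult in H1; simpl in H1.
  lra.
Qed.

Lemma G0 : G 0 = 0.
Proof. unfold G. apply (RInt_point (V:=R_CompleteNormedModule)). Qed.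

Lemma Phi0 : Phi 0 = PI / 4.
Proof.
  unfold Phi.
  rewrite (RInt_ext (V:=R_CompleteNormedModule) _ (fun t => / (1 + t ^ 2))).
  2:{ intros t _. unfold h. replace (-(0*0)*(1+t*t)) with 0 by ring. rewrite exp_0.
      change (1 / (1 + t*t) = / (1 + t^2)). unfold Rdiv. rewrite Rmult_1_l. f_equal. ring. }
  rewrite <- atan_1.
  replace (atan 1) with (minus (atan 1) (atan 0)).
  apply (is_RInt_unique (V:=R_CompleteNormedModule)).
  apply (is_RInt_derive (V:=R_CompleteNormedModule)).
  - intros. apply is_derive_Reals, derivable_pt_lim_atan.
  - intros. apply cont_of_der. auto_derive. generalize (pos1t x); nra.
  - rewrite atan_0. unfold minus, plus, opp; simpl. ring.
Qed.

Lemma F0 : F 0 = PI / 4.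
Proof. unfold F. rewrite G0, Phi0. ring. Qed.

Lemma Phi_bounds x : 0 <= Phi x <= exp (-(x*x)).
Proof.
  assert (Hex : ex_RInt (h x) 0 1) by (apply ex_RInt_cont; intros; apply h_cont).
  split.
  - apply RInt_ge_0. lra. exact Hex. intros t _. unfold h.
    apply Rlt_le, Rdiv_lt_0_compat. apply exp_pos. apply pos1t.
  - replace (exp (-(x*x))) with (RInt (fun _ => exp (-(x*x))) 0 1).
    apply RInt_le. lra. exact Hex. apply ex_RInt_cont; intros; apply continuous_const.
    intros t Ht. unfold h.
    assert (A : exp (-(x*x)*(1+t*t)) <= exp (-(x*x))).
    { destruct (Req_dec (-(x*x)*(1+t*t)) (-(x*x))) as [E|E]. rewrite E; lra.
      apply Rlt_le, exp_increasing. nra. }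
    apply Rle_trans with (exp (-(x * x) * (1 + t * t))).
    unfold Rdiv. rewrite <- (Rmult_1_r (exp (-(x * x) * (1 + t * t)))) at 2.
    apply Rmult_le_compat_l. apply Rlt_le, exp_pos.
    rewrite <- Rinv_1. apply Rinv_le_contravar. lra. nra. exact A.
    rewrite (RInt_const (V:=R_CompleteNormedModule)). unfold scal; simpl; unfold mult; simpl. ring.
Qed.

Lemma G_nonneg x : 0 <= x -> 0 <= G x.
Proof.
  intros Hx. unfold G. apply RInt_ge_0. exact Hx. apply ex_RInt_g.
  intros; unfold g; apply Rlt_le, exp_pos.
Qed.

Definition sg := sqrt PI / 2.

Lemma sg_pos : 0 < sg.
Proof. unfold sg. generalize (sqrt_lt_R0 PI PI_RGT_0). lra. Qed.

Lemma sg_sq : sg * sg = PI / 4.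
Proof. unfold sg. replace (sqrt PI / 2 * (sqrt PI / 2)) with (sqrt PI * sqrt PI / 4) by field. rewrite sqrt_sqrt. lra. generalize PI_RGT_0; lra. Qed.

Lemma G_close x : 0 <= x -> Rabs (G x - sg) <= exp (-(x*x)) / sg.
Proof.
  intros Hx.
  assert (E : G x * G x = PI / 4 - Phi x).
  { generalize (F_const x); rewrite F0; unfold F; lra. }
  assert (HG := G_nonneg x Hx). assert (Hs := sg_pos). assert (Hs2 := sg_sq).
  assert (HP := Phi_bounds x).
  assert (E2 : G x - sg = - Phi x / (G x + sg)).
  { field_simplify. 2: lra. apply Rmult_eq_reg_r with (G x + sg). 2: lra.
    field_simplify. 2: lra. nra. }
  rewrite E2. unfold Rdiv. rewrite Rabs_mult, Rabs_Ropp, Rabs_right by lra.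
  rewrite Rabs_right. 2: apply Rle_ge, Rlt_le, Rinv_0_lt_compat; lra.
  apply Rmult_le_compat. lra. apply Rlt_le, Rinv_0_lt_compat; lra. lra.
  apply Rinv_le_contravar; lra.
Qed.

Lemma exp_le x y : x <= y -> exp x <= exp y.
Proof. intros H. destruct (Req_dec x y) as [->|E]. lra. apply Rlt_le, exp_increasing. lra. Qed.

Lemma cosh_half t : cosh t = 1 + 2 * sinh (1/2*t) * sinh (1/2*t).
Proof.
  unfold cosh, sinh.
  assert (E1 : exp t = exp (1/2*t) * exp (1/2*t)) by (rewrite <- exp_plus; f_equal; lra).
  assert (E2 : exp (-t) = exp (-(1/2*t)) * exp (-(1/2*t))) by (rewrite <- exp_plus; f_equal; lra).
  assert (E3 : exp (1/2*t) * exp (-(1/2*t)) = 1) by (rewrite <- exp_plus; replace (1/2*t + -(1/2*t)) with 0 by lra; apply exp_0).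
  rewrite E1, E2. nra.
Qed.

Definition aa (z : R) := sqrt (2*z).
Definition cc (z : R) := exp (-z) * 2 / aa z.
Definition HH (z t : R) := cc z * G (aa z * sinh (1/2*t)).
Definition kf (nu z t : R) := exp (- z * cosh t) * cosh (nu * t).

Lemma is_derive_sinh_half (a t : R) : is_derive (fun t => a * sinh (1/2*t)) t (a * cosh (1/2*t) / 2).
Proof. unfold sinh, cosh. auto_derive. auto. field. Qed.

Lemma aa_pos z : 0 < z -> 0 < aa z.
Proof. intros; unfold aa; apply sqrt_lt_R0; lra. Qed.

Lemma aa_sq z : 0 < z -> aa z * aa z = 2 * z.
Proof. intros; unfold aa; apply sqrt_sqrt; lra. Qed.

Lemma is_derive_HH z t : 0 < z -> is_derive (HH z) t (kf (1/2) z t).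
Proof.
  intros Hz.
  assert (H1 := is_derive_comp G (fun t => aa z * sinh (1/2*t)) t _ _ (is_derive_G _) (is_derive_sinh_half (aa z) t)).
  assert (H2 := is_derive_scal _ t (cc z) _ H1).
  unfold HH. unfold scal in H2; simpl in H2; unfold mult in H2; simpl in H2.
  replace (kf (1/2) z t) with (cc z * (aa z * cosh (1 / 2 * t) / 2 * g (aa z * sinh (1 / 2 * t)))).
  exact H2.
  unfold kf, g, cc. rewrite (cosh_half t).
  assert (A := aa_pos z Hz). assert (A2 := aa_sq z Hz).
  replace (-(aa z * sinh (1/2*t) * (aa z * sinh (1/2*t)))) with (- (2*z) * (sinh (1/2*t) * sinh (1/2*t))) by (rewrite <- A2; ring).
  replace (- z * (1 + 2 * sinh (1 / 2 * t) * sinh (1 / 2 * t))) with (-z + - (2*z) * (sinh (1/2*t) * sinh (1/2*t))) by ring.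
  rewrite exp_plus. field. lra.
Qed.

Lemma kf_cont nu z t : continuous (kf nu z) t.
Proof. apply cont_of_der. unfold kf, cosh. auto_derive. auto. Qed.

Lemma ex_RInt_kf nu z a b : ex_RInt (kf nu z) a b.
Proof. apply ex_RInt_cont. intros; apply kf_cont. Qed.

Lemma HH0 z : HH z 0 = 0.
Proof. unfold HH. replace (1/2*0) with 0 by ring. unfold sinh. rewrite Ropp_0, exp_0.
  replace (aa z * ((1-1)/2)) with 0 by field. rewrite G0. ring. Qed.

Lemma is_RInt_half z b : 0 < z -> is_RInt (kf (1/2) z) 0 b (HH z b).
Proof.
  intros Hz. rewrite <- (Rminus_0_r (HH z b)). rewrite <- (HH0 z) at 2.
  apply (is_RInt_derive (V:=R_CompleteNormedModule)).
  intros; apply is_derive_HH; auto. intros; apply kf_cont.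
Qed.

Lemma sinh_lb y : 0 <= y -> y / 2 <= sinh y.
Proof.
  intros Hy. unfold sinh. assert (A := exp_ineq1_le y).
  assert (B : exp (-y) <= 1) by (rewrite <- exp_0; apply exp_le; lra). lra.
Qed.

Lemma gauss_tail y : exp (-(y*y)) <= / (1 + y*y).
Proof.
  rewrite exp_Ropp. apply Rinv_le_contravar. nra. apply exp_ineq1_le.
Qed.

Lemma HH_lim z : 0 < z -> forall eps : posreal, exists M, forall b, M < b -> Rabs (HH z b - cc z * sg) < eps.
Proof.
  intros Hz eps. assert (Ha := aa_pos z Hz). assert (Hs := sg_pos). destruct eps as [e He]; simpl.
  assert (Hc : 0 < cc z) by (unfold cc; apply Rdiv_lt_0_compat; [generalize (exp_pos (-z)); lra | exact Ha]).
  set (Y := cc z / (sg * e)).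
  assert (HY : 0 < Y) by (unfold Y; apply Rdiv_lt_0_compat; nra).
  exists (4 * Y / aa z). intros b Hb.
  assert (Hb0 : 0 < b). { assert (0 < 4 * Y / aa z) by (apply Rdiv_lt_0_compat; lra). lra. }
  set (y := aa z * sinh (1/2*b)).
  assert (Hy : Y < y).
  { unfold y. assert (S := sinh_lb (1/2*b)). assert (Hbb : 4*Y < aa z * b).
    { apply Rmult_lt_compat_r with (r := aa z) in Hb; auto. unfold Rdiv in Hb.
      rewrite Rmult_assoc, Rinv_l in Hb; lra. }
    nra. }
  unfold HH. fold y.
  replace (cc z * G y - cc z * sg) with (cc z * (G y - sg)) by ring.
  rewrite Rabs_mult, (Rabs_right (cc z)) by lra.
  assert (Hc1 := G_close y ltac:(lra)).
  assert (Ht := gauss_tail y).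
  apply Rle_lt_trans with (cc z * (exp (- (y * y)) / sg)).
  apply Rmult_le_compat_l; lra.
  apply Rle_lt_trans with (cc z * (/ (1 + y*y) / sg)).
  apply Rmult_le_compat_l. lra. unfold Rdiv. apply Rmult_le_compat_r. left; apply Rinv_0_lt_compat; lra. exact Ht.
  assert (E : e = cc z / (sg * Y)) by (unfold Y; field; repeat split; lra).
  rewrite E.
  replace (cc z * (/ (1 + y * y) / sg)) with (cc z / (sg * (1 + y*y))) by (field; split; apply Rgt_not_eq; nra).
  unfold Rdiv. apply Rmult_lt_compat_l. lra. apply Rinv_lt_contravar. apply Rmult_lt_0_compat; nra.
  apply Rmult_lt_compat_l. lra. nra.
Qed.

Lemma gen_of_lim (f : R -> R) (I : R -> R) L :
  (forall b, 0 < b -> is_RInt f 0 b (I b)) ->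
  (forall eps : posreal, exists M, forall b, M < b -> Rabs (I b - L) < eps) ->
  RInt_gen f (at_point 0) (Rbar_locally p_infty) = L.
Proof.
  intros H1 H2. apply is_RInt_gen_unique.
  intros P [eps HP].
  destruct (H2 eps) as [M HM].
  apply Filter_prod with (Q := fun a => a = 0) (R := fun b => 0 < b /\ Rabs (I b - L) < eps).
  - reflexivity.
  - exists (Rmax M 0). intros x Hx. split. generalize (Rmax_r M 0); lra.
    apply HM. generalize (Rmax_l M 0); lra.
  - intros a b -> [Hb Hb2]. exists (I b). split. apply H1; auto.
    apply HP. exact Hb2.
Qed.

Lemma mono_lim (I : R -> R) C :
  (forall a b, 0 <= a <= b -> I a <= I b) -> (forall b, 0 <= b -> I b <= C) ->
  exists L, (forall b, 0 <= b -> I b <= L) /\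
    forall eps : posreal, exists M, forall b, M < b -> Rabs (I b - L) < eps.
Proof.
  intros Hm Hb.
  set (E := fun y => exists b, 0 <= b /\ y = I b).
  assert (HE : bound E) by (exists C; intros y [b [H0 ->]]; auto).
  assert (HE2 : exists x, E x) by (exists (I 0); exists 0; split; auto; lra).
  destruct (completeness E HE HE2) as [L [HL1 HL2]].
  exists L. split.
  - intros b H0. apply HL1. exists b; auto.
  - intros [eps He]; simpl.
    assert (exists b0, 0 <= b0 /\ L - eps < I b0) as [b0 [Hb0 Hb1]].
    { apply Classical_Prop.NNPP. intros Hn.
      assert (L <= L - eps). { apply HL2. intros y [b [H0 ->]].
        destruct (Rle_lt_dec (I b) (L - eps)); auto. exfalso; apply Hn; exists b; auto. }
      lra. }
    exists b0. intros b Hbb.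
    assert (I b0 <= I b) by (apply Hm; lra).
    assert (I b <= L) by (apply HL1; exists b; split; auto; lra).
    rewrite Rabs_left1 by lra. lra.
Qed.

Lemma cosh_mono x y : 0 <= y <= x -> cosh y <= cosh x.
Proof.
  intros H. unfold cosh. rewrite !exp_Ropp.
  assert (HX : exp y <= exp x) by (apply exp_le; lra).
  assert (HY : 1 <= exp y) by (rewrite <- exp_0; apply exp_le; lra).
  set (X := exp x) in *. set (Y := exp y) in *.
  assert (u1 : X * / X = 1) by (field; lra). assert (v1 : Y * / Y = 1) by (field; lra).
  assert (0 < / X) by (apply Rinv_0_lt_compat; lra).
  assert (0 < / Y) by (apply Rinv_0_lt_compat; lra).
  assert (E : / Y - / X = (X - Y) * / X * / Y) by (field; lra).
  assert (/ X * / Y <= 1).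
  { assert (/X <= 1) by (rewrite <- Rinv_1; apply Rinv_le_contravar; lra).
    assert (/Y <= 1) by (rewrite <- Rinv_1; apply Rinv_le_contravar; lra). nra. }
  nra.
Qed.

Lemma kf_nonneg nu z t : 0 <= kf nu z t.
Proof. unfold kf, cosh. generalize (exp_pos (-z*((exp t + exp (-t))/2))) (exp_pos (nu*t)) (exp_pos (-(nu*t))). nra. Qed.

Lemma kf_le nu z t : 1/2 <= nu -> 0 <= t -> kf (1/2) z t <= kf nu z t.
Proof.
  intros Hn Ht. unfold kf. apply Rmult_le_compat_l. apply Rlt_le, exp_pos.
  apply cosh_mono. nra.
Qed.

Lemma cosh_lb t : 0 <= t -> t * t / 8 <= cosh t.
Proof.
  intros Ht. unfold cosh.
  assert (E : exp t = exp (t/2) * exp (t/2)) by (rewrite <- exp_plus; f_equal; lra).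
  assert (A := exp_ineq1_le (t/2)). generalize (exp_pos (-t)). nra.
Qed.

Definition Cn (nu z : R) := exp (2 * (nu+1) * (nu+1) / z).

Lemma kf_bound nu z t : 0 < z -> 0 <= nu -> 0 <= t -> kf nu z t <= Cn nu z * exp (-t).
Proof.
  intros Hz Hn Ht. unfold kf, Cn.
  assert (H1 : cosh (nu*t) <= exp (nu*t)).
  { unfold cosh. assert (exp (-(nu*t)) <= exp (nu*t)) by (apply exp_le; nra). lra. }
  apply Rle_trans with (exp (-z*cosh t) * exp (nu*t)).
  apply Rmult_le_compat_l. apply Rlt_le, exp_pos. exact H1.
  rewrite <- !exp_plus. apply exp_le.
  assert (H2 := cosh_lb t Ht).
  assert (H3 : (nu+1)*t - z*(t*t/8) <= 2*(nu+1)*(nu+1)/z).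
  { apply Rmult_le_reg_l with z. exact Hz. unfold Rdiv.
    replace (z * (2 * (nu + 1) * (nu + 1) * / z)) with (2 * (nu+1)*(nu+1)) by (field; lra).
    assert (Hsq : 0 <= Rsqr (z*t - 4*(nu+1))) by apply Rle_0_sqr. unfold Rsqr in Hsq.
    replace (z * ((nu + 1) * t - z * (t * t * / 8))) with ((8*z*(nu+1)*t - z*z*t*t)/8) by field. lra. }
  nra.
Qed.

Definition In (nu z b : R) := RInt (kf nu z) 0 b.

Lemma In_bound nu z b : 0 < z -> 0 <= nu -> 0 <= b -> In nu z b <= Cn nu z.
Proof.
  intros Hz Hn Hb. unfold In.
  assert (HC : 0 < Cn nu z) by apply exp_pos.
  apply Rle_trans with (RInt (fun t => Cn nu z * exp (-t)) 0 b).
  apply RInt_le; auto. apply ex_RInt_kf. apply ex_RInt_cont. intros; apply cont_of_der; auto_derive; auto.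
  intros; apply kf_bound; lra.
  assert (Hi : is_RInt (fun t => Cn nu z * exp (-t)) 0 b (minus ((fun t => - Cn nu z * exp (-t)) b) ((fun t => - Cn nu z * exp (-t)) 0))).
  { apply (is_RInt_derive (V:=R_CompleteNormedModule) (fun t => - Cn nu z * exp (-t))).
    intros. auto_derive. auto. ring. intros; apply cont_of_der; auto_derive; auto. }
  apply (is_RInt_unique (V:=R_CompleteNormedModule)) in Hi. rewrite Hi.
  unfold minus, plus, opp; simpl. rewrite Ropp_0, exp_0. generalize (exp_pos (-b)). nra.
Qed.

Lemma In_mono nu z a b : 0 <= a <= b -> In nu z a <= In nu z b.
Proof.
  intros H. unfold In.
  rewrite <- (RInt_Chasles (V:=R_CompleteNormedModule) (kf nu z) 0 a b) by apply ex_RInt_kf.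
  unfold plus; simpl.
  assert (0 <= RInt (kf nu z) a b). { apply RInt_ge_0. lra. apply ex_RInt_kf. intros; apply kf_nonneg. }
  lra.
Qed.

Lemma half_val z : 0 < z -> besselK (1/2) z = cc z * sg.
Proof.
  intros Hz. apply (gen_of_lim (kf (1/2) z) (HH z)).
  intros; apply is_RInt_half; auto. apply HH_lim; auto.
Qed.

Lemma nu_ge nu z : 0 < z -> 1/2 <= nu -> cc z * sg <= besselK nu z.
Proof.
  intros Hz Hn.
  destruct (mono_lim (In nu z) (Cn nu z)) as [L [HL1 HL2]].
  intros; apply In_mono; auto. intros; apply In_bound; auto; lra.
  assert (E : besselK nu z = L).
  { apply (gen_of_lim (kf nu z) (In nu z)). intros; apply (RInt_correct (V:=R_CompleteNormedModule)), ex_RInt_kf. exact HL2. }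
  rewrite E.
  destruct (Rle_lt_dec (cc z * sg) L) as [H|H]; auto. exfalso.
  destruct (HH_lim z Hz (mkposreal _ (Rlt_Rminus _ _ H))) as [M HM]; simpl in HM.
  set (b := Rmax M 0 + 1).
  assert (Hb : M < b) by (unfold b; generalize (Rmax_l M 0); lra).
  assert (Hb0 : 0 <= b) by (unfold b; generalize (Rmax_r M 0); lra).
  specialize (HM b Hb).
  assert (H1 : HH z b <= In nu z b).
  { rewrite <- (is_RInt_unique (V:=R_CompleteNormedModule) _ _ _ _ (is_RInt_half z b Hz)).
    unfold In. apply RInt_le; auto; try apply ex_RInt_kf. intros; apply kf_le; lra. }
  assert (H2 := HL1 b Hb0).
  apply Rabs_def2 in HM. lra.
Qed.

Lemma key_ineq B z : 0 < B -> B <= sqrt (PI / exp 1) -> 0 < z ->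
  let x0 := PI / B ^ 2 in
  2 * z <= ln x0 - ln (ln x0) + / 2 * (ln (ln x0) / ln x0) ->
  B <= cc z * sg.
Proof.
  intros HB HBs Hz x0 Hw.
  assert (HPI := PI_RGT_0).
  assert (He : 0 < exp 1) by apply exp_pos.
  assert (HB2 : B ^ 2 <= PI / exp 1).
  { assert (0 <= B) by lra. assert (B * B <= sqrt (PI/exp 1) * sqrt (PI / exp 1)) by nra.
    rewrite sqrt_sqrt in H0. simpl; lra. apply Rlt_le, Rdiv_lt_0_compat; lra. }
  assert (Hx0 : exp 1 <= x0).
  { unfold x0. apply Rmult_le_reg_r with (B^2). simpl; nra.
    unfold Rdiv. rewrite Rmult_assoc, Rinv_l. 2: simpl; nra.
    apply Rmult_le_reg_r with (/ exp 1). apply Rinv_0_lt_compat; lra.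
    replace (exp 1 * B ^ 2 * / exp 1) with (B^2) by (field; lra). lra. }
  assert (Hx0p : 0 < x0) by lra.
  set (L := ln x0) in *.
  assert (HL : 1 <= L) by (unfold L; rewrite <- (ln_exp 1); apply ln_le; lra).
  set (lL := ln L) in *.
  assert (HlL : 0 <= lL) by (unfold lL; rewrite <- ln_1; apply ln_le; lra).
  set (a := lL / L).
  assert (Ha : 0 <= a) by (unfold a; apply Rmult_le_pos; [lra| left; apply Rinv_0_lt_compat; lra]).
  set (w0 := L - lL + / 2 * (lL / L)) in *.
  set (w := 2 * z) in *.
  assert (Hw0 : 0 < w0) by (unfold w in Hw; lra).
  assert (Hwpos : 0 < w) by (unfold w; lra).
  assert (S1 : w * exp w <= w0 * exp w0).
  { apply Rmult_le_compat; try lra. apply Rlt_le, exp_pos. apply exp_le; lra. }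
  assert (Ew0 : exp w0 = x0 * / L * exp (a / 2)).
  { unfold w0. replace (/ 2 * (lL / L)) with (a/2) by (unfold a; field; lra).
    unfold Rminus. rewrite !exp_plus. rewrite exp_Ropp.
    assert (E1 : exp L = x0) by (unfold L; apply exp_ln; lra).
    assert (E2 : exp lL = L) by (unfold lL; apply exp_ln; lra).
    rewrite E1, E2. reflexivity. }
  assert (S2 : w0 / L <= exp (- (a/2))).
  { assert (T := exp_ineq1_le (-(a/2))).
    replace (w0 / L) with (1 - a + a / (2 * L)) by (unfold w0, a; field; lra).
    assert (a / (2*L) <= a / 2).
    { unfold Rdiv. apply Rmult_le_compat_l. lra. apply Rinv_le_contravar; lra. }
    lra. }
  assert (S3 : w0 * exp w0 <= x0).
  { rewrite Ew0.
    replace (w0 * (x0 * / L * exp (a / 2))) with (x0 * ((w0 / L) * exp (a/2))) by (field; lra).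
    rewrite <- (Rmult_1_r x0) at 2. apply Rmult_le_compat_l. lra.
    replace 1 with (exp (-(a/2)) * exp (a/2)) by (rewrite <- exp_plus; replace (-(a/2) + a/2) with 0 by ring; apply exp_0).
    apply Rmult_le_compat_r. apply Rlt_le, exp_pos. exact S2. }
  assert (Hsq : B * B <= (cc z * sg) * (cc z * sg)).
  { assert (Ecs : (cc z * sg) * (cc z * sg) = PI * / (w * exp w)).
    { unfold cc, sg, w. assert (A2 := aa_sq z Hz). assert (A := aa_pos z Hz).
      replace (exp (- z) * 2 / aa z * (sqrt PI / 2) * (exp (- z) * 2 / aa z * (sqrt PI / 2)))
        with ((exp (-z) * exp (-z)) * (sqrt PI * sqrt PI) / (aa z * aa z)) by (field; lra).
      rewrite sqrt_sqrt by lra. rewrite A2. rewrite <- exp_plus.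
      replace (-z + -z) with (- (2*z)) by ring. rewrite exp_Ropp. field.
      split; [apply Rgt_not_eq, exp_pos| lra]. }
    rewrite Ecs.
    assert (EB : B * B = PI * / x0) by (unfold x0; simpl; field; split; lra).
    rewrite EB. apply Rmult_le_compat_l. lra. apply Rinv_le_contravar.
    apply Rmult_lt_0_compat; [lra | apply exp_pos]. lra. }
  assert (0 < cc z * sg).
  { apply Rmult_lt_0_compat. unfold cc. apply Rdiv_lt_0_compat. generalize (exp_pos (-z)); lra.
    apply aa_pos; auto. apply sg_pos. }
  nra.
Qed.

Theorem proposition4 (nu B z : R) :
  1/2 <= nu -> 0 < B -> B <= sqrt (PI / exp 1) -> 0 < z ->
  let x0 := PI / B ^ 2 in
  2 * z <= ln x0 - ln (ln x0) + / 2 * (ln (ln x0) / ln x0) ->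
  besselK (1/2) z <= besselK nu z /\ B <= besselK (1/2) z.
Proof.
  intros Hn HB HBs Hz x0 Hw.
  rewrite half_val by auto. split.
  apply nu_ge; auto.
  apply (key_ineq B z); auto.
Qed.
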